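(* Let $m,d\in\mathbb N$. Let $H$ be a bipartite graph with vertex classes $X$ and $Y$ such that any two sets $X'\subseteq X$, $Y'\subseteq Y$ with $|X'|=|Y'|=m$ have an edge between them. Suppose $X_0\subseteq X$ and $Y_0\subseteq Y$ satisfy $|X_0|,|Y_0|\ge (3d+4)m$. Then there is a set $B\subseteq V(H)$ with $|B|\le 2m$ such that every $U\subseteq V(H)\setminus B$ with $|U|\le m$ satisfies $|N(U,(X_0\cup Y_0)\setminus B)|\ge d|U|$.
   Context: For $U\subseteq V(H)$, $N(U)=\big(\bigcup_{u\in U}N(u)\big)\setminus U$ is the exterior neighbourhood, and $N(U,W)=N(U)\cap W$. *)

(* Defs.v *)
From mathcomp Require Import all_boot.
Set Implicit Arguments. Unset Strict Implicit. Unset Printing Implicit Defensive.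

Definition simple_graph (V : finType) (e : rel V) : Prop :=
  irreflexive e /\ symmetric e.

Definition bipartite_with (V : finType) (e : rel V) (X Y : {set V}) : Prop :=
  [/\ [disjoint X & Y], X :|: Y = setT &
      forall u v, e u v -> (u \in X) && (v \in Y) || (u \in Y) && (v \in X)].

Definition nbhd (V : finType) (e : rel V) (u : V) : {set V} := [set v | e u v].

Definition ext_nbhd (V : finType) (e : rel V) (U : {set V}) : {set V} :=
  (\bigcup_(u in U) nbhd e u) :\: U.

Definition ext_nbhd_in (V : finType) (e : rel V) (U W : {set V}) : {set V} :=
  ext_nbhd e U :&: W.

(* Main.v *)
Require Import Defs.
From mathcomp Require Import all_boot.
From mathcomp Require Import zify.

Lemma sub_card (T : finType) (A : {set T}) k : k <= #|A| ->
  exists B : {set T}, B \subset A /\ #|B| = k.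
Proof.
elim: k => [|k IH] hk; first by exists set0; rewrite sub0set cards0.
have [B [sBA cB]] := IH (ltnW hk).
have : 0 < #|A :\: B| by rewrite cardsDS // cB subn_gt0.
case/card_gt0P => x; rewrite inE => /andP [xB xA].
exists (x |: B); rewrite subUset sub1set xA sBA cardsU1 xB cB; split => //.
Qed.

Arguments sub_card {T A k}.

Lemma cardD_ge (T : finType) (A B : {set T}) : #|A| - #|B| <= #|A :\: B|.
Proof.
rewrite cardsD; apply: leq_sub2l; apply: subset_leq_card; exact: subsetIr.
Qed.

Arguments cardD_ge {T}.

Lemma in_N (V : finType) (e : rel V) (S W : {set V}) x y :
  x \in S -> e x y -> y \notin S -> y \in W -> y \in ext_nbhd_in e S (W :\: S).
Proof.
move=> xS exy yS yW; rewrite /ext_nbhd_in /ext_nbhd !inE yS yW /= andbT.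
by apply/bigcupP; exists x => //; rewrite inE.
Qed.

Arguments in_N {V e S W x y}.

Lemma N_union (V : finType) (e : rel V) (B U W : {set V}) :
  ext_nbhd_in e (B :|: U) (W :\: (B :|: U)) \subset
  ext_nbhd_in e B (W :\: B) :|: ext_nbhd_in e U (W :\: B).
Proof.
apply/subsetP => y; rewrite /ext_nbhd_in /ext_nbhd !inE.
case/and3P => /andP [yBU /bigcupP [x xBU]]; rewrite inE => exy _ yW.
move: xBU; rewrite inE => /orP [xB|xU]; move: yBU; rewrite negb_or => /andP [yB yU].
  apply/orP; left; rewrite yB yW /= ?andbT; apply/bigcupP; exists x => //; by rewrite inE.
apply/orP; right; rewrite yB yU yW /= ?andbT; apply/bigcupP; exists x => //; by rewrite inE.
Qed.

Arguments N_union {V}.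

Theorem proposition3p36 (m d : nat) (V : finType) (e : rel V) (X Y : {set V}) :
  simple_graph e ->
  bipartite_with e X Y ->
  (forall X' Y' : {set V}, X' \subset X -> Y' \subset Y ->
      #|X'| = m -> #|Y'| = m -> exists x, exists y, [/\ x \in X', y \in Y' & e x y]) ->
  forall X0 Y0 : {set V}, X0 \subset X -> Y0 \subset Y ->
  (3 * d + 4) * m <= #|X0| -> (3 * d + 4) * m <= #|Y0| ->
  exists B : {set V}, #|B| <= 2 * m /\
    forall U : {set V}, U \subset ~: B -> #|U| <= m ->
      d * #|U| <= #|ext_nbhd_in e U ((X0 :|: Y0) :\: B)|.
Proof.
move=> [_ esym] [_ XY _] hH X0 Y0 sX0 sY0 hX0 hY0.
set W := X0 :|: Y0.
pose N S := ext_nbhd_in e S (W :\: S).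
have bad : forall S : {set V}, 2 * m < #|S| -> #|S| <= 3 * m -> #|N S| <= 3 * d * m -> False.
  move=> S h1 h2 h3.
  have hS : #|S| <= #|S :&: X| + #|S :&: Y|.
    by rewrite -{1}(setIT S) -XY setIUr; exact: leq_card_setU.
  have hZ : forall Z0 : {set V}, (3 * d + 4) * m <= #|Z0| ->
      m <= #|Z0 :\: (S :|: N S)|.
    move=> Z0 hZ0; apply: (leq_trans _ (cardD_ge Z0 (S :|: N S))).
    have := leq_card_setU S (N S); case => + _; lia.
  have ZW : forall (Z0 : {set V}) y, Z0 \subset W -> y \in Z0 :\: (S :|: N S) ->
      [/\ y \in W, y \notin S & y \notin N S].
    move=> Z0 y sZ; rewrite in_setD in_setU negb_or => /andP [/andP [yS yN] yZ].
    by split => //; exact: (subsetP sZ _ yZ).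
  have [hx|hy] : m <= #|S :&: X| \/ m <= #|S :&: Y| by lia.
  - have [X' [sX' cX']] := sub_card hx.
    have [Y' [sY' cY']] := sub_card (hZ _ hY0).
    have [x [y [xX yY exy]]] := hH X' Y' (subset_trans sX' (subsetIr _ _))
      (subset_trans sY' (subset_trans (subsetDl _ _) sY0)) cX' cY'.
    have [yW yS yN] := ZW Y0 y (subsetUr _ _) (subsetP sY' _ yY).
    have xS : x \in S by move: (subsetP sX' _ xX); rewrite inE => /andP [].
    by move: yN; rewrite (in_N xS exy yS yW).
  - have [Y' [sY' cY']] := sub_card hy.
    have [X' [sX' cX']] := sub_card (hZ _ hX0).
    have [x [y [xX yY exy]]] := hH X' Y'
      (subset_trans sX' (subset_trans (subsetDl _ _) sX0))
      (subset_trans sY' (subsetIr _ _)) cX' cY'.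
    have [xW xS xN] := ZW X0 x (subsetUl _ _) (subsetP sX' _ xX).
    have yS : y \in S by move: (subsetP sY' _ yY); rewrite inE => /andP [].
    by rewrite esym in exy; move: xN; rewrite (in_N yS exy xS xW).
pose P (B : {set V}) := (#|B| <= 2 * m) && (#|N B| <= d * #|B|).
have P0 : P set0.
  by rewrite /P /N /ext_nbhd_in /ext_nbhd big_set0 set0D set0I !cards0.
case: (@arg_maxnP _ set0 P (fun B : {set V} => #|B|) P0) => B /andP [PB1 PB2] maxB.
exists B; split => // U sU cU.
rewrite leqNgt; apply/negP => hlt.
have dBU : #|B :|: U| = #|B| + #|U|.
  have : [disjoint B & U] by rewrite disjoint_sym disjoints_subset.
  by rewrite -(leq_card_setU B U) => /eqP.
have hN : #|N (B :|: U)| <= d * #|B :|: U|.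
  apply: leq_trans (subset_leq_card (N_union e B U W)) _.
  apply: leq_trans (leq_card_setU _ _) _.
  rewrite dBU mulnDr; move: hlt PB2; rewrite /N; lia.
have Upos : 0 < #|U| by move: hlt; case: #|U| => //; rewrite muln0.
have [small|big] := leqP #|B :|: U| (2 * m).
  have := maxB (B :|: U); rewrite /P small hN dBU => /(_ isT); lia.
apply: (bad (B :|: U) big); first by lia.
apply: leq_trans hN _; rewrite (mulnC 3 d) -mulnA; apply: leq_mul => //; lia.
Qed.
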